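(* Let $(\mathcal{X},d)$ be a finite metric space $\mathcal{X}=\{x_0,x_1,\dots,x_n\}$ ($n\ge 1$, the $x_i$ pairwise distinct), and let $(\mathcal{Y},\|\cdot\|)$ be a non-trivial, strictly convex real Banach space. For every $y\in\operatorname{Lip}^1_0$ there exist an integer $k\le n+1$, points $y^1,\dots,y^k\in\operatorname{ext}(\operatorname{Lip}^1_0)$ and scalars $\lambda_1,\dots,\lambda_k\ge0$ with $\sum_{i=1}^k\lambda_i=1$ such that $y=\sum_{i=1}^k\lambda_i y^i$.
   Context: $\operatorname{Lip}^1_0$ denotes the set of all $y=(y_0,\dots,y_n)\in\mathcal{Y}^{n+1}$ with $y_0=0$ and $\|y_i-y_j\|\le d(x_i,x_j)$ for all $i,j\in\{0,1,\dots,n\}$; it is a convex subset of $\mathcal{Y}^{n+1}$. $\operatorname{ext}(C)$ denotes the set of extreme points of a convex set $C$ (points $y\in C$ such that $y=\lambda y^1+(1-\lambda)y^2$ with $y^1,y^2\in C$, $\lambda\in(0,1)$ forces $y^1=y^2=y$). *)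

(* Defs.v *)
From HB Require Import structures.
From mathcomp Require Import all_boot all_order all_algebra.
From mathcomp Require Import all_classical all_reals all_analysis.
Set Implicit Arguments. Unset Strict Implicit. Unset Printing Implicit Defensive.
Import Order.TTheory GRing.Theory Num.Theory.
Import numFieldNormedType.Exports.
Local Open Scope ring_scope.

(* A metric on the index set {0,...,n}: d i j = d(x_i, x_j), where the
   points x_0,...,x_n are pairwise distinct (d i j = 0 iff i = j). *)
Definition is_metric (n : nat) (R : realType) (d : 'I_n.+1 -> 'I_n.+1 -> R) : Prop :=
  (forall i j, 0 <= d i j) /\
  (forall i j, d i j = 0 <-> i = j) /\
  (forall i j, d i j = d j i) /\
  (forall i j k, d i k <= d i j + d j k).

Definition strictly_convex (R : realType) (Y : normedModType R) : Prop :=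
  forall u v : Y, `|u| = 1 -> `|v| = 1 -> u != v -> `|(2%:R)^-1 *: (u + v)| < 1.

Definition Lip10 (n : nat) (R : realType) (Y : normedModType R)
  (d : 'I_n.+1 -> 'I_n.+1 -> R) (y : 'I_n.+1 -> Y) : Prop :=
  y ord0 = 0 /\ forall i j, `|y i - y j| <= d i j.

Definition is_extreme (n : nat) (R : realType) (Y : normedModType R)
  (C : ('I_n.+1 -> Y) -> Prop) (y : 'I_n.+1 -> Y) : Prop :=
  C y /\
  forall (y1 y2 : 'I_n.+1 -> Y) (lam : R), C y1 -> C y2 -> 0 < lam < 1 ->
    (forall j, y j = lam *: y1 j + (1 - lam) *: y2 j) -> y1 = y /\ y2 = y.

(* Main.v *)
Require Import Defs.
From HB Require Import structures.
From mathcomp Require Import all_boot all_order all_algebra.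
From mathcomp Require Import all_classical all_reals all_analysis.
From mathcomp Require Import ring lra.
Import Order.TTheory GRing.Theory Num.Theory.
Import numFieldNormedType.Exports.
Local Open Scope ring_scope.
Section SC.
Variables (R : realType) (Y : normedModType R).
Hypothesis hsc : strictly_convex Y.

Lemma sc_eq (a b : Y) (D lam : R) : 0 < D -> `|a| <= D -> `|b| <= D ->
  0 < lam < 1 -> `|lam *: a + (1 - lam) *: b| = D -> a = b.
Proof.
move=> D0 ha hb /andP[l0 l1] he.
have hle : D <= lam * `|a| + (1 - lam) * `|b|.
  rewrite -he; apply: le_trans (ler_normD _ _) _.
  by rewrite !normrZ !ger0_norm ?subr_ge0 ?(ltW l0) ?(ltW l1).
have na : `|a| = D.
  have : (1 - lam) * `|b| <= (1 - lam) * D by rewrite ler_wpM2l // subr_ge0 (ltW l1).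
  nra.
have nb : `|b| = D.
  have : lam * `|a| <= lam * D by rewrite ler_wpM2l // (ltW l0).
  nra.
apply/eqP; apply/negPn/negP => hab.
have Dn0 : D != 0 by rewrite gt_eqF.
have hu : `|D^-1 *: a| = 1 by rewrite normrZ na ger0_norm ?invr_ge0 ?(ltW D0) // mulVf.
have hv : `|D^-1 *: b| = 1 by rewrite normrZ nb ger0_norm ?invr_ge0 ?(ltW D0) // mulVf.
have huv : D^-1 *: a != D^-1 *: b.
  apply/negP => /eqP /(congr1 (fun x => D *: x)).
  by rewrite !scalerA mulfV // !scale1r; apply/eqP.
have := hsc _ _ hu hv huv.
rewrite -scalerDr scalerA normrZ ger0_norm; last by rewrite mulr_ge0 // invr_ge0 ?(ltW D0).
move=> hlt.
have hab2 : `|a + b| < 2 * D.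
  have : 2^-1 * D^-1 * `|a + b| * (2 * D) < 1 * (2 * D).
    by rewrite ltr_pM2r // mulr_gt0.
  have -> : 2^-1 * D^-1 * `|a + b| * (2 * D) = `|a + b|.
    by field; rewrite Dn0.
  by rewrite mul1r.
have [hl|hl] := lerP (2^-1) lam.
- have e2 : lam *: a + (1 - lam) *: b = (1 - lam) *: (a + b) + (2 * lam - 1) *: a.
    by rewrite scalerDr -addrA [X in _ = _ + X]addrC addrA -scalerDl; congr (_ *: _ + _); ring.
  suff : `|lam *: a + (1 - lam) *: b| < D by rewrite he ltxx.
  rewrite e2.
  apply: le_lt_trans (ler_normD _ _) _.
  rewrite !normrZ (ger0_norm (x:=1-lam)) ?subr_ge0 ?(ltW l1) // ger0_norm; last first.
    have : 1 <= 2 * lam.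
      have := ler_wpM2l (ler0n R 2) hl. by rewrite mulfV.
    by rewrite subr_ge0.
  rewrite na.
  have : (1 - lam) * `|a + b| < (1 - lam) * (2 * D) by rewrite ltr_pM2l // subr_gt0.
  lra.
- have e2 : lam *: a + (1 - lam) *: b = lam *: (a + b) + (1 - 2 * lam) *: b.
    by rewrite scalerDr -addrA -scalerDl; congr (_ + _ *: _); ring.
  suff : `|lam *: a + (1 - lam) *: b| < D by rewrite he ltxx.
  rewrite e2.
  apply: le_lt_trans (ler_normD _ _) _.
  rewrite !normrZ (ger0_norm (x:=lam)) ?(ltW l0) // ger0_norm; last first.
    have : 2 * lam <= 1.
      have := ler_wpM2l (ler0n R 2) (ltW hl). by rewrite mulfV.
    by rewrite subr_ge0.
  rewrite nb.
  have : lam * `|a + b| < lam * (2 * D) by rewrite ltr_pM2l.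
  lra.
Qed.
End SC.
Lemma connect_prop (T : finType) (e : rel T) (P : T -> Prop) :
  (forall x y, e x y -> P x -> P y) -> forall x y, connect e x y -> P x -> P y.
Proof.
move=> hP x y /connectP [p hp ->]; elim: p x hp => [//|a p IH] x /= /andP [hxa hp] Px.
exact: IH _ hp (hP _ _ hxa Px).
Qed.

Section Graph.
Variables (R : realType) (Y : normedModType R) (n : nat)
  (d : 'I_n.+1 -> 'I_n.+1 -> R).
Hypothesis hd : is_metric d.

Definition tight (z : 'I_n.+1 -> Y) : rel 'I_n.+1 := fun i j => `|z i - z j| == d i j.
Notation conn z := (connect (tight z)).
Definition reps z := #|[set i : 'I_n.+1 | [forall j, conn z i j ==> (i <= j)%N]]|.
Definition rep z i := [arg min_(j < i | conn z i j) (j : nat)].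

Lemma tight_sym z : symmetric (tight z).
Proof.
move=> i j; rewrite /tight distrC.
by case: hd => _ [_ [-> _]].
Qed.

Lemma conn_sym z : connect_sym (tight z).
Proof. exact/sym_connect_sym/tight_sym. Qed.

Lemma rep_conn z i : conn z i (rep z i).
Proof. rewrite /rep; case: arg_minnP => //; exact: connect0. Qed.

Lemma rep_min z i j : conn z i j -> (rep z i <= j)%N.
Proof. rewrite /rep; case: arg_minnP => [|k _ hk]; [exact: connect0| exact: hk]. Qed.

Lemma rep_in z i : rep z i \in [set i : 'I_n.+1 | [forall j, conn z i j ==> (i <= j)%N]].
Proof.
rewrite inE; apply/forallP => j; apply/implyP => hj.
apply: rep_min; exact: connect_trans (rep_conn z i) hj.
Qed.

Lemma reps_gt0 z : (0 < reps z)%N.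
Proof. apply/card_gt0P; exists (rep z ord0); exact: rep_in. Qed.

Lemma reps_le z : (reps z <= n.+1)%N.
Proof. by rewrite /reps -[X in (_ <= X)%N]card_ord max_card. Qed.

Lemma reps_lt z w i0 j0 : subrel (tight z) (tight w) -> tight w i0 j0 ->
  ~~ conn z i0 j0 -> (reps w < reps z)%N.
Proof.
move=> hsub ht hnc.
have hcw : subrel (conn z) (conn w).
  apply: connect_sub => x y /hsub; exact: connect1.
apply: proper_card; apply/properP; split.
  apply/fintype.subsetP => i; rewrite !inE => /forallP h; apply/forallP => j.
  by apply/implyP => /hcw hj; move/implyP: (h j); apply.
have hsz := conn_sym z; have hsw := conn_sym w.
have hne : rep z i0 != rep z j0.
  apply/negP => /eqP he; move/negP: hnc; apply.
  apply: connect_trans (rep_conn z i0) _; rewrite he; rewrite hsz; exact: rep_conn.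
have key : forall a b, ~~ conn z a b -> tight w a b -> (rep z a < rep z b)%N ->
    exists2 x, x \in [set i : 'I_n.+1 | [forall j, conn z i j ==> (i <= j)%N]] &
      x \notin [set i : 'I_n.+1 | [forall j, conn w i j ==> (i <= j)%N]].
  move=> a b _ hab hlt; exists (rep z b); first exact: rep_in.
  rewrite inE negb_forall; apply/existsP; exists (rep z a).
  rewrite negb_imply -ltnNge hlt andbT.
  apply: connect_trans (hcw _ _ _) _; first by rewrite hsz; exact: rep_conn.
  apply: connect_trans (connect1 _) _; first by rewrite tight_sym; exact: hab.
  exact: hcw (rep_conn z a).
case: (ltngtP (rep z i0) (rep z j0)) => hc.
- exact: key hnc ht hc.
- apply: (key j0 i0) => //; [by rewrite hsz | by rewrite tight_sym].
- by move: hne; rewrite (val_inj hc) eqxx.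
Qed.
End Graph.
Arguments tight {R Y n} d z.
Arguments reps {R Y n} d z.
Arguments rep {R Y n} d z i.
Section Ext.
Variables (R : realType) (Y : normedModType R) (n : nat)
  (d : 'I_n.+1 -> 'I_n.+1 -> R).
Hypothesis hd : is_metric d.
Hypothesis hsc : strictly_convex Y.

Lemma extreme_of_conn (z : 'I_n.+1 -> Y) : Lip10 d z ->
  [forall j, connect (tight d z) ord0 j] -> is_extreme (Lip10 d) z.
Proof.
move=> hz hc; split => // y1 y2 lam [h10 h1] [h20 h2] hl hy.
have key : forall j, y1 j = z j /\ y2 j = z j.
  move=> j; apply: (@connect_prop _ _ (fun j => y1 j = z j /\ y2 j = z j) _ ord0 j (forallP hc j)); last first.
    by rewrite h10 h20; case: hz.
  move=> i k /eqP ht [e1 e2].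
  have [<-|hik] := eqVneq i k; first by split.
  have D0 : 0 < d i k.
    case: hd => [h0 [hz0 _]]; rewrite lt_def h0 andbT; apply/eqP => /hz0 /eqP.
    by rewrite (negbTE hik).
  have hzik : z i - z k = lam *: (y1 i - y1 k) + (1 - lam) *: (y2 i - y2 k).
    by rewrite !hy !scalerBr opprD addrACA.
  have hab := @sc_eq _ _ hsc _ _ _ _ D0 (h1 i k) (h2 i k) hl (etrans (congr1 _ (esym hzik)) ht).
  have hzz : z i - z k = y1 i - y1 k by rewrite hzik hab -scalerDl (addrC lam) subrK scale1r.
  split.
    by rewrite -(subKr (y1 i) (y1 k)) -hzz e1 subKr.
  by rewrite -(subKr (y2 i) (y2 k)) -hab -hzz e2 subKr.
by split; apply/funext => j; case: (key j).
Qed.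
End Ext.
Section Sup.
Variables (R : realType) (Y : normedModType R).

Definition Tsup (a b : Y) (D : R) := sup [set t : R | 0 <= t /\ `|a + t *: b| <= D]%classic.

Lemma shift_norm (a b : Y) (t s : R) : `|a + s *: b| <= `|a + t *: b| + `|s - t| * `|b|.
Proof.
have -> : a + s *: b = (a + t *: b) + (s - t) *: b.
  by rewrite -addrA -scalerDl [t + _]addrC subrK.
by apply: le_trans (ler_normD _ _) _; rewrite normrZ.
Qed.

Lemma Tsup_spec (a b : Y) (D : R) : b != 0 -> `|a| <= D ->
  0 <= Tsup a b D /\ `|a + Tsup a b D *: b| = D /\
  forall t, 0 <= t <= Tsup a b D -> `|a + t *: b| <= D.
Proof.
move=> b0 ha; set A := [set t : R | 0 <= t /\ `|a + t *: b| <= D]%classic.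
have nb : 0 < `|b| by rewrite normr_gt0.
have A0 : A 0 by split => //; rewrite scale0r addr0.
have hs : has_sup A.
  split; first by exists 0.
  exists ((D + D) / `|b|) => t [t0 ht].
  rewrite ler_pdivlMr //.
  have : `|t *: b| <= `|a + t *: b| + `|a|.
    have e : t *: b = (a + t *: b) - a by rewrite addrC addKr.
    by rewrite {1}e; exact: ler_normB.
  rewrite normrZ ger0_norm //; lra.
rewrite /Tsup -/A; set T := sup A.
have T0 : 0 <= T by exact: sup_upper_bound hs _ A0.
have hT : `|a + T *: b| <= D.
  apply/ler_addgt0Pr => e e0.
  have [t' [t'0 ht'] ht'T] := sup_adherent (divr_gt0 e0 nb) hs.
  rewrite -/T in ht'T.
  have t'T : t' <= T by exact: sup_upper_bound hs _ (conj t'0 ht').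
  apply: le_trans (shift_norm a b t' T) _.
  rewrite ger0_norm ?subr_ge0 //.
  have : (T - t') * `|b| <= e / `|b| * `|b| by rewrite ler_pM2r //; lra.
  rewrite divfK ?gt_eqF //; lra.
split => //; split.
  apply/eqP; rewrite eq_le hT /=; rewrite leNgt; apply/negP => hlt.
  set del := (D - `|a + T *: b|) / `|b|.
  have del0 : 0 < del by rewrite divr_gt0 // subr_gt0.
  have : A (T + del).
    split; first by rewrite addr_ge0 // ltW.
    apply: le_trans (shift_norm a b T (T + del)) _.
    rewrite addrAC subrr add0r ger0_norm ?(ltW del0) // divfK ?gt_eqF //; lra.
  move=> /(sup_upper_bound hs); rewrite -/T; lra.
move=> t /andP [t0 tT].
have [->|tlt] := eqVneq t T; first exact: hT.
have tltT : t < T by rewrite lt_neqAle tlt tT.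
have Tt0 : 0 < T - t by rewrite subr_gt0.
have [t' [t'0 ht'] ht't] := sup_adherent Tt0 hs.
have tt' : t < t' by move: ht't; rewrite -/T; lra.
have t'p : 0 < t' by lra.
set mu := t / t'.
have -> : a + t *: b = (1 - mu) *: a + mu *: (a + t' *: b).
  rewrite scalerDr addrA -scalerDl subrK scale1r scalerA /mu divfK ?gt_eqF //.
apply: le_trans (ler_normD _ _) _; rewrite !normrZ.
have mu0 : 0 <= mu by rewrite /mu divr_ge0 // ltW.
have mu1 : mu <= 1 by rewrite /mu ler_pdivrMr // mul1r ltW.
rewrite !ger0_norm ?subr_ge0 //.
have : (1 - mu) * `|a| <= (1 - mu) * D by rewrite ler_wpM2l ?subr_ge0.
have : mu * `|a + t' *: b| <= mu * D by rewrite ler_wpM2l.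
rewrite /mu; lra.
by rewrite invr_ge0 ltW.
Qed.
End Sup.
Section Ray.
Variables (R : realType) (Y : normedModType R) (n : nat)
  (d : 'I_n.+1 -> 'I_n.+1 -> R).
Hypothesis hd : is_metric d.

Lemma diff_eq (z v : 'I_n.+1 -> Y) (s : R) i k :
  (z i + s *: v i) - (z k + s *: v k) = (z i - z k) + s *: (v i - v k).
Proof. by rewrite scalerBr opprD addrACA. Qed.

Lemma ray (z v : 'I_n.+1 -> Y) : Lip10 d z -> v ord0 = 0 ->
  (forall i j, tight d z i j -> v i = v j) -> (exists j, v j != 0) ->
  exists s : R, 0 <= s /\ Lip10 d (fun j => z j + s *: v j) /\
    exists i0 j0, tight d (fun j => z j + s *: v j) i0 j0 /\ v i0 != v j0.
Proof.
move=> hz v0 hv [j hj].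
pose P := fun p : 'I_n.+1 * 'I_n.+1 => v p.1 != v p.2.
pose Tf := fun p : 'I_n.+1 * 'I_n.+1 => @Tsup R Y (z p.1 - z p.2) (v p.1 - v p.2) (d p.1 p.2).
have Pj : P (ord0, j) by rewrite /P /= v0 eq_sym.
have spec : forall p, P p -> 0 <= Tf p /\ `|(z p.1 - z p.2) + Tf p *: (v p.1 - v p.2)| = d p.1 p.2 /\
    forall t, 0 <= t <= Tf p -> `|(z p.1 - z p.2) + t *: (v p.1 - v p.2)| <= d p.1 p.2.
  move=> p Pp; apply: Tsup_spec; last by case: hz => _; apply.
  by rewrite subr_eq0.
case: (@Order.TotalTheory.arg_minP _ _ _ (ord0, j) P Tf Pj) => [[i0 j0] Pp hmin].
have [s0 [st _]] := spec _ Pp.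
exists (Tf (i0, j0)); split => //; split.
  split; first by rewrite v0 scaler0 addr0; case: hz.
  move=> i k; rewrite diff_eq.
  have [e|ne] := eqVneq (v i) (v k).
    by rewrite e subrr scaler0 addr0; case: hz => _; apply.
  have Pik : P (i, k) by [].
  have [_ [_ hall]] := spec _ Pik; apply: hall.
  by rewrite s0 /=; exact: hmin.
exists i0, j0; split => //.
by rewrite /tight diff_eq; apply/eqP.
Qed.
End Ray.
Arguments reps_gt0 {R Y n d}.
Arguments reps_lt {R Y n d}.
Arguments conn_sym {R Y n d}.
Arguments extreme_of_conn {R Y n d}.
Arguments ray {R Y n d}.
Arguments diff_eq {R Y n}.
Section Main.
Variables (R : realType) (Y : normedModType R) (n : nat)
  (d : 'I_n.+1 -> 'I_n.+1 -> R).
Hypothesis hd : is_metric d.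
Hypothesis hsc : strictly_convex Y.
Variable u : Y.
Hypothesis hu : u != 0.

Lemma const_conn (z : 'I_n.+1 -> Y) (f : 'I_n.+1 -> Y) :
  (forall i j, tight d z i j -> f i = f j) ->
  forall i j, connect (tight d z) i j -> f i = f j.
Proof.
move=> hf i j hc.
apply: (@connect_prop _ _ (fun k => f i = f k) _ i j hc) => //.
by move=> x y /hf -> .
Qed.

Lemma tight_shift (z v : 'I_n.+1 -> Y) (s : R) :
  (forall i j, tight d z i j -> v i = v j) ->
  subrel (tight d z) (tight d (fun j => z j + s *: v j)).
Proof.
move=> hv i k ht; rewrite /tight diff_eq (hv _ _ ht) subrr scaler0 addr0; exact: ht.
Qed.

Lemma ext_slice m : forall z : 'I_n.+1 -> Y, Lip10 d z -> (reps d z <= m)%N ->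
  exists v : 'I_n.+1 -> Y, v ord0 = 0 /\ (forall i j, tight d z i j -> v i = v j) /\
    is_extreme (Lip10 d) (fun j => z j + v j).
Proof.
elim: m => [|m IH] z hz hm.
  by move: (reps_gt0 (d:=d) z); rewrite leqn0 in hm; rewrite (eqP hm).
have [hc|hc] := boolP [forall j, connect (tight d z) ord0 j].
  exists (fun _ => 0); split => //; split => //.
  have -> : (fun j => z j + 0) = z by apply/funext => j; rewrite addr0.
  exact: extreme_of_conn.
move/forallPn: hc => [j hj].
have hsym := conn_sym hd z.
pose vv := fun i => if connect (tight d z) j i then u else 0.
have vv0 : vv ord0 = 0 by rewrite /vv hsym (negbTE hj).
have vvc : forall i k, tight d z i k -> vv i = vv k.
  move=> i k ht; rewrite /vv (same_connect_r hsym (connect1 ht)) //.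
have vvj : vv j != 0 by rewrite /vv connect0.
have [s [s0 [hw [i0 [j0 [ht hne]]]]]] := ray _ _ hz vv0 vvc (ex_intro _ j vvj).
set w := fun j => z j + s *: vv j.
have hlt : (reps d w < reps d z)%N.
  apply: (reps_lt hd _ _ i0 j0) => //.
    exact: tight_shift.
  by apply/negP => /(const_conn _ _ vvc) /eqP; rewrite (negbTE hne).
have hwm : (reps d w <= m)%N by rewrite -ltnS; exact: leq_trans hlt hm.
have [v' [v'0 [v'c hext]]] := IH w hw hwm.
exists (fun i => s *: vv i + v' i); split.
  by rewrite vv0 v'0 scaler0 addr0.
split.
  move=> i k hik; rewrite (vvc _ _ hik) (v'c i k) //; exact: tight_shift.
have -> : (fun j => z j + (s *: vv j + v' j)) = (fun j => w j + v' j).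
  by apply/funext => i; rewrite /w addrA.
exact: hext.
Qed.

Lemma decomp m : forall z : 'I_n.+1 -> Y, Lip10 d z -> (reps d z <= m)%N ->
  exists k : nat, (k <= reps d z)%N /\
    exists (ys : 'I_k -> 'I_n.+1 -> Y) (lam : 'I_k -> R),
      (forall i, is_extreme (Lip10 d) (ys i)) /\
      (forall i, 0 <= lam i) /\
      \sum_(i < k) lam i = 1 /\
      (forall j, z j = \sum_(i < k) lam i *: ys i j).
Proof.
elim: m => [|m IH] z hz hm.
  by move: (reps_gt0 (d:=d) z); rewrite leqn0 in hm; rewrite (eqP hm).
have [v [v0 [vc hext]]] := ext_slice _ _ hz hm.
have [hv|hv] := boolP [forall j, v j == 0].
  exists 1%N; split; first exact: reps_gt0.
  exists (fun _ => fun j => z j + v j), (fun _ => 1); split.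
    by move=> _; exact: hext.
  split; first by move=> _; exact: ler01.
  split; first by rewrite big_ord1.
  by move=> j; rewrite big_ord1 scale1r (eqP (forallP hv j)) addr0.
move/forallPn: hv => [j hj].
have nv0 : - v ord0 = 0 by rewrite v0 oppr0.
have nvc : forall i k, tight d z i k -> - v i = - v k by move=> i k /vc ->.
have nvj : - v j != 0 by rewrite oppr_eq0.
have [s [s0 [hw [i0 [j0 [ht hne]]]]]] :=
  ray _ (fun i => - v i) hz nv0 nvc (ex_intro _ j nvj).
set w := fun j => z j + s *: - v j.
have hlt : (reps d w < reps d z)%N.
  apply: (reps_lt hd _ _ i0 j0) => //.
    exact: tight_shift.
  by apply/negP => /(const_conn _ _ nvc) /eqP; rewrite (negbTE hne).
have hwm : (reps d w <= m)%N by rewrite -ltnS; exact: leq_trans hlt hm.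
have [k [hk [ys [lam [hys [hl0 [hl1 hwj]]]]]]] := IH w hw hwm.
have s1 : 1 + s != 0 by rewrite gt_eqF // ltr_pwDl.
set l0 := s / (1 + s); set mu := (1 + s)^-1.
exists k.+1; split; first exact: leq_ltn_trans hk hlt.
exists (fun i => oapp ys (fun j => z j + v j) (unlift ord0 i)).
exists (fun i => oapp (fun i' => mu * lam i') l0 (unlift ord0 i)).
have mu0 : 0 <= mu by rewrite invr_ge0 addr_ge0.
split.
  by move=> i; case: (unlift ord0 i) => [i'|] /=.
split.
  move=> i; case: (unlift ord0 i) => [i'|] /=; first by rewrite mulr_ge0.
  by rewrite divr_ge0 // addr_ge0.
rewrite big_ord_recl unlift_none /=.
under eq_bigr => i _ do rewrite liftK /=.
split.
  by rewrite -mulr_sumr hl1 mulr1 /l0 /mu; field.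
move=> i; rewrite big_ord_recl unlift_none /=.
under eq_bigr => i' _ do rewrite liftK /= -scalerA.
rewrite -scaler_sumr -hwj /w.
have e1 : l0 + mu = 1 by rewrite /l0 /mu; field.
have e2 : l0 - mu * s = 0 by rewrite /l0 /mu; field.
rewrite !scalerDr !scalerN scalerA addrACA -scalerDl -scalerBl e1 e2.
by rewrite scale1r scale0r addr0.
Qed.
End Main.

Theorem theorem2 (R : realType) (Y : completeNormedModType R) (n : nat)
  (d : 'I_n.+1 -> 'I_n.+1 -> R) :
  (1 <= n)%N -> is_metric d -> (exists u : Y, u != 0) -> strictly_convex Y ->
  forall y : 'I_n.+1 -> Y, Lip10 d y ->
  exists k : nat, (k <= n.+1)%N /\
    exists (ys : 'I_k -> 'I_n.+1 -> Y) (lam : 'I_k -> R),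
      (forall i, is_extreme (Lip10 d) (ys i)) /\
      (forall i, 0 <= lam i) /\
      \sum_(i < k) lam i = 1 /\
      (forall j, y j = \sum_(i < k) lam i *: ys i j).
Proof.
move=> _ hd [u hu] hsc y hy.
have [k [hk H]] := @decomp R Y n d hd hsc u hu (reps d y) y hy (leqnn _).
exists k; split => //.
exact: leq_trans hk (@reps_le R Y n d y).
Qed.
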